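(* Let $N\geq 0$ be an integer. Then for all real $t$, \[ \tanh t=\sum_{j=1}^{N}\frac{2^{2j}(2^{2j}-1)B_{2j}}{(2j)!}\,t^{2j-1}+\tau_N(t),\qquad \tau_N(t)=(-1)^N\frac{2^{2N+3}t^{2N+1}}{\pi^{2N}}\sum_{k=1}^{\infty}\frac{1}{(2k-1)^{2N}\bigl(\pi^2(2k-1)^2+4t^2\bigr)}. \] Moreover, for every real $t\neq 0$, \[ \tanh t=\sum_{j=1}^{N}\frac{2^{2j}(2^{2j}-1)B_{2j}}{(2j)!}\,t^{2j-1}+\xi(t,N)\,\frac{2^{2N+2}(2^{2N+2}-1)B_{2N+2}}{(2N+2)!}\,t^{2N+1} \] for some number $\xi(t,N)$ with $0<\xi(t,N)<1$.
   Context: The Bernoulli numbers $B_n$ are defined by $\frac{t}{e^t-1}=\sum_{n=0}^\infty B_n\frac{t^n}{n!}$ for $|t|<2\pi$. An empty sum is understood to be zero. *)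

(* Defs.v *)
From Stdlib Require Import Reals Arith.
Open Scope R_scope.

(* B is the sequence of Bernoulli numbers: t/(e^t-1) = sum_n B_n t^n/n!
   for 0 < |t| < 2*pi (at t = 0 the left side is understood as its limit 1;
   the punctured disc already determines B uniquely). *)
Definition is_bernoulli (B : nat -> R) : Prop :=
  forall t : R, 0 < Rabs t < 2 * PI ->
    infinite_sum (fun n : nat => B n * t ^ n / INR (fact n)) (t / (exp t - 1)).

Fixpoint sum1 (N : nat) (f : nat -> R) : R :=
  match N with
  | O => 0
  | S n => sum1 n f + f (S n)
  end.

Definition tanh_term (B : nat -> R) (t : R) (j : nat) : R :=
  2 ^ (2 * j)%nat * (2 ^ (2 * j)%nat - 1) * B (2 * j)%nat / INR (fact (2 * j))
  * t ^ (2 * j - 1)%nat.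

(* Main.v *)
Require Import Defs.
From Stdlib Require Import Reals Arith Lra Lia.
From Coquelicot Require Import Coquelicot.
Open Scope R_scope.

Fixpoint fsum (n : nat) (f : nat -> R) : R :=
  match n with O => 0 | S n => fsum n f + f n end.

Lemma fsum_ext n f g : (forall k, (k < n)%nat -> f k = g k) -> fsum n f = fsum n g.
Proof. induction n; intros H; simpl; auto. rewrite IHn by (intros; apply H; lia). rewrite H by lia; auto. Qed.

Lemma fsum_plus n f g : fsum n (fun k => f k + g k) = fsum n f + fsum n g.
Proof. induction n; simpl; [lra|]. rewrite IHn; lra. Qed.

Lemma fsum_minus n f g : fsum n (fun k => f k - g k) = fsum n f - fsum n g.
Proof. induction n; simpl; [lra|]. rewrite IHn; lra. Qed.

Lemma fsum_scal n c f : fsum n (fun k => c * f k) = c * fsum n f.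
Proof. induction n; simpl; [lra|]. rewrite IHn; lra. Qed.

Lemma fsum_split a b f : fsum (a + b) f = fsum a f + fsum b (fun k => f (a + k)%nat).
Proof. induction b; simpl. rewrite Nat.add_0_r; lra. rewrite Nat.add_succ_r; simpl. rewrite IHb; lra. Qed.

Lemma fsum_shift n f : fsum (S n) f = f 0%nat + fsum n (fun k => f (S k)).
Proof. induction n; simpl in *. lra. rewrite IHn; lra. Qed.

Lemma fsum_rev n f : fsum n (fun k => f (n - 1 - k)%nat) = fsum n f.
Proof.
  induction n. reflexivity.
  rewrite fsum_shift. replace (S n - 1 - 0)%nat with n by lia.
  rewrite (fsum_ext n _ (fun k => f (n - 1 - k)%nat)) by (intros; f_equal; lia).
  rewrite IHn. simpl. lra.
Qed.

Lemma fsum_abs n f : Rabs (fsum n f) <= fsum n (fun k => Rabs (f k)).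
Proof. induction n; simpl. rewrite Rabs_R0; lra. eapply Rle_trans. apply Rabs_triang. lra. Qed.

Lemma fsum_le n f g : (forall k, (k < n)%nat -> f k <= g k) -> fsum n f <= fsum n g.
Proof. induction n; intros H; simpl. lra. assert (f n <= g n) by (apply H; lia).
  assert (fsum n f <= fsum n g) by (apply IHn; intros; apply H; lia). lra. Qed.

Lemma fsum_sumf n f : fsum (S n) f = sum_f_R0 f n.
Proof. induction n; simpl in *. lra. rewrite <- IHn. simpl. lra. Qed.

Lemma fsum_nonneg n f : (forall k, 0 <= f k) -> 0 <= fsum n f.
Proof. intros H; induction n; simpl. lra. specialize (H n); lra. Qed.

Lemma fsum_term_le n f k : (forall k, 0 <= f k) -> (k < n)%nat -> f k <= fsum n f.
Proof. intros H; induction n; intros Hk. lia. simpl.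
  destruct (Nat.eq_dec k n). subst. pose proof (fsum_nonneg n f H); lra.
  pose proof (IHn ltac:(lia)); specialize (H n); lra. Qed.

Lemma fsum_mono n m f : (forall k, 0 <= f k) -> (n <= m)%nat -> fsum n f <= fsum m f.
Proof. intros H Hnm. replace m with (n + (m - n))%nat by lia. rewrite fsum_split.
  pose proof (fsum_nonneg (m - n) (fun k => f (n + k)%nat) (fun k => H _)); lra. Qed.

Notation exs := (@ex_series R_AbsRing R_NormedModule).
Lemma Series_zero : Series (fun _ => 0) = 0.
Proof. rewrite (Series_ext _ (fun n => 0 * (fun _ => 0) n)) by (intros; lra).
  rewrite Series_scal_l; lra. Qed.

Lemma Series_nonneg a : (forall n, 0 <= a n) -> exs a -> 0 <= Series a.
Proof. intros H He. rewrite <- Series_zero. apply Series_le; auto. intros; split; [lra|auto]. Qed.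

Lemma ser_partial_le a n : (forall n, 0 <= a n) -> exs a -> fsum n a <= Series a.
Proof.
  intros H He. destruct n. simpl. apply Series_nonneg; auto.
  rewrite (Series_incr_n a (S n)) by (auto; lia). simpl (Nat.pred (S n)).
  rewrite fsum_sumf. pose proof (Series_nonneg (fun k => a (S n + k)%nat) (fun k => H _)
    (proj1 (ex_series_incr_n a (S n)) He)). lra.
Qed.

Lemma ser_tail a : exs a -> forall eps, 0 < eps ->
  exists K, forall n, (K <= n)%nat -> Rabs (Series a - fsum n a) < eps.
Proof.
  intros He eps Heps. pose proof (Series_correct a He) as Hs.
  apply is_series_Reals in Hs. destruct (Hs eps Heps) as [N HN].
  exists (S N). intros n Hn. destruct n. lia. rewrite fsum_sumf.
  specialize (HN n ltac:(lia)). unfold Rdist in HN. rewrite Rabs_minus_sym; auto.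
Qed.

Lemma ser_abs_le (u : nat -> R) (l : R) (v : nat -> R) (lv : R) : is_series u l -> (forall i, Rabs (u i) <= v i) -> is_series v lv ->
  Rabs l <= lv.
Proof.
  intros Hu Hle Hv. assert (exv : exs v) by (exists lv; auto).
  assert (exa : exs (fun i => Rabs (u i))).
  { apply (@ex_series_le R_AbsRing R_CompleteNormedModule _ v); auto. intros; unfold norm; simpl; unfold abs; simpl. rewrite Rabs_Rabsolu; auto. }
  rewrite <- (is_series_unique u l Hu), <- (is_series_unique v lv Hv).
  eapply Rle_trans. apply Series_Rabs; auto. apply Series_le; auto.
  intros; split; [apply Rabs_pos|auto].
Qed.

Lemma ser_lower a : (forall n, 0 <= a n) -> exs a -> a 0%nat <= Series a.
Proof. intros H He. pose proof (ser_partial_le a 1 H He) as Hp. simpl in Hp. lra. Qed.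

Lemma is_series_finite a K : (forall n, (K <= n)%nat -> a n = 0) -> is_series a (fsum K a).
Proof.
  intros H. apply is_series_Reals. intros eps Heps. exists K. intros n Hn.
  rewrite <- fsum_sumf. replace (S n) with (K + (S n - K))%nat by lia.
  rewrite fsum_split. rewrite (fsum_ext _ (fun k => a (K + k)%nat) (fun _ => 0)) by (intros k Hk; apply H; lia).
  assert (forall m, fsum m (fun _ => 0) = 0) as Z by (induction m; simpl; lra).
  rewrite Z. unfold Rdist. replace (fsum K a + 0 - fsum K a) with 0 by lra. rewrite Rabs_R0; lra.
Qed.

Lemma cv_bounded u l : Un_cv u l -> exists K, forall p, Rabs (u p) <= K.
Proof.
  intros H. destruct (H 1 ltac:(lra)) as [N HN].
  exists (Rabs l + 1 + fsum N (fun k => Rabs (u k))). intros p.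
  pose proof (fsum_nonneg N (fun k => Rabs (u k)) (fun k => Rabs_pos _)).
  destruct (Nat.lt_ge_cases p N) as [Hp|Hp].
  - pose proof (fsum_term_le N (fun k => Rabs (u k)) p (fun k => Rabs_pos _) Hp) as H1. simpl in H1.
    pose proof (Rabs_pos l). lra.
  - specialize (HN p Hp). unfold Rdist in HN.
    pose proof (Rabs_triang_inv (u p) l). lra.
Qed.

Lemma telesc_sum n : sum_f_R0 (fun k => / (INR k + 1) - / (INR k + 2)) n = 1 - / (INR n + 2).
Proof.
  induction n. simpl. lra.
  rewrite tech5. rewrite IHn. rewrite S_INR. pose proof (pos_INR n). field. lra.
Qed.

Lemma is_series_telesc : is_series (fun k => / (INR k + 1) - / (INR k + 2)) 1.
Proof.
  apply is_series_Reals. intros eps Heps.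
  destruct (archimed (/ eps)) as [Ha _].
  destruct (INR_unbounded (/ eps)) as [N HN].
  exists N. intros n Hn. unfold Rdist. rewrite telesc_sum.
  apply le_INR in Hn. pose proof (pos_INR n).
  assert (/ (INR n + 2) < eps).
  { apply (Rmult_lt_reg_l (INR n + 2)). lra. rewrite Rinv_r by lra.
    apply (Rmult_lt_reg_l (/ eps)). apply Rinv_0_lt_compat; lra.
    replace (/ eps * ((INR n + 2) * eps)) with (INR n + 2) by (field; lra). lra. }
  assert (0 < / (INR n + 2)) by (apply Rinv_0_lt_compat; lra).
  rewrite Rabs_left1; lra.
Qed.

Lemma ex_series_odd2 : exs (fun k => / (2 * INR k + 1) ^ 2).
Proof.
  apply (@ex_series_le R_AbsRing R_CompleteNormedModule _ (fun k => 2 * (/ (INR k + 1) - / (INR k + 2)))).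
  - intros k. unfold norm; simpl; unfold abs; simpl. pose proof (pos_INR k).
    rewrite Rabs_pos_eq by (apply Rlt_le, Rinv_0_lt_compat; nra).
    replace (2 * (/ (INR k + 1) - / (INR k + 2))) with (/ ((INR k + 1) * (INR k + 2) / 2)) by (field; lra).
    apply Rinv_le_contravar. nra. nra.
  - exists (2 * 1). apply (is_series_scal_l 2 _ 1). apply is_series_telesc.
Qed.

Lemma exp_double u : exp (2 * u) = exp u * exp u.
Proof. replace (2 * u) with (u + u) by ring. apply exp_plus. Qed.

Lemma exp_neg_double u : exp (- (2 * u)) = / (exp u * exp u).
Proof. rewrite exp_Ropp, exp_double. reflexivity. Qed.

Lemma sinh2 u : sinh (2 * u) = 2 * sinh u * cosh u.
Proof. unfold sinh, cosh. rewrite exp_neg_double, exp_double, exp_Ropp.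
  pose proof (exp_pos u). field. lra. Qed.

Lemma cosh2 u : cosh (2 * u) = 2 * cosh u ^ 2 - 1.
Proof. unfold cosh. rewrite exp_neg_double, exp_double, exp_Ropp.
  pose proof (exp_pos u). field. lra. Qed.

Lemma cosh_half u : cosh u = 1 + 2 * sinh (u / 2) ^ 2.
Proof. replace u with (2 * (u / 2)) at 1 by field. rewrite cosh2.
  unfold sinh, cosh. rewrite exp_Ropp. pose proof (exp_pos (u/2)). field. lra. Qed.

Lemma sinh_neq0 u : u <> 0 -> sinh u <> 0.
Proof. intros H. destruct (Rlt_or_le u 0) as [H1|H1].
  - pose proof (sinh_lt _ _ H1). rewrite sinh_0 in H0. lra.
  - assert (0 < u) by lra. pose proof (sinh_lt _ _ H0). rewrite sinh_0 in H2. lra. Qed.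

Lemma cosh_gt1 u : u <> 0 -> 1 < cosh u.
Proof. intros H. rewrite cosh_half. assert (sinh (u/2) <> 0) by (apply sinh_neq0; lra).
  assert (0 < sinh (u/2) ^ 2) by (apply pow2_gt_0; auto). lra. Qed.

Lemma cosh_ge1 u : 1 <= cosh u.
Proof. rewrite cosh_half. pose proof (pow2_ge_0 (sinh (u/2))). lra. Qed.

Lemma tanh_G y : tanh y = sinh (2 * y) / (cosh (2 * y) - cos PI).
Proof. unfold tanh. rewrite sinh2, cosh2, cos_PI. pose proof (cosh_ge1 y). field. split; nra. Qed.

Definition G (u a : R) : R := sinh u / (cosh u - cos a).

Lemma G_dup u a : G u a + G u (a + PI) = 2 * G (2 * u) (2 * a).
Proof.
  unfold G. destruct (Req_dec u 0) as [->|Hu].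
  - replace (2 * 0) with 0 by ring. rewrite sinh_0. unfold Rdiv. ring.
  - rewrite neg_cos, sinh2, cosh2, cos_2a_cos. pose proof (cosh_gt1 u Hu). pose proof (COS_bound a).
    field. repeat split; nra.
Qed.

Lemma G_iter m u a : G u a = / 2 ^ m * fsum (2 ^ m)%nat (fun k => G (u / 2 ^ m) ((a + 2 * INR k * PI) / 2 ^ m)).
Proof.
  induction m.
  - simpl. replace (u / 1) with u by field. replace ((a + 2 * 0 * PI) / 1) with a by field. field.
  - rewrite IHm. assert (Hs : (2 ^ S m = 2 ^ m + 2 ^ m)%nat) by (simpl; lia).
    rewrite Hs, fsum_split, <- fsum_plus. symmetry.
    rewrite (fsum_ext _ _ (fun k => 2 * G (u / 2 ^ m) ((a + 2 * INR k * PI) / 2 ^ m))).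
    + rewrite fsum_scal. simpl pow. pose proof (pow_lt 2 m ltac:(lra)). field. lra.
    + intros k _. rewrite plus_INR, pow_INR. replace (INR 2) with 2 by (simpl; ring).
      pose proof (pow_lt 2 m ltac:(lra)).
      replace ((a + 2 * (2 ^ m + INR k) * PI) / 2 ^ S m) with ((a + 2 * INR k * PI) / 2 ^ S m + PI)
        by (simpl; field; lra).
      rewrite G_dup. f_equal. f_equal; simpl; field; lra.
Qed.

Lemma cos_2PI_minus x : cos (2 * PI - x) = cos x.
Proof. rewrite cos_minus, cos_2PI, sin_2PI. ring. Qed.

Definition w y p k := / 2 ^ p * G (y / 2 ^ p) ((2 * INR k + 1) * PI / 2 ^ S p).

Lemma tanh_finite y p : tanh y = fsum (2 ^ p)%nat (w y p).
Proof.
  rewrite tanh_G. change (sinh (2 * y) / (cosh (2 * y) - cos PI)) with (G (2 * y) PI).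
  rewrite (G_iter (S p)). assert (Hs : (2 ^ S p = 2 ^ p + 2 ^ p)%nat) by (simpl; lia).
  pose proof (pow_lt 2 p ltac:(lra)) as H2p.
  rewrite Hs, fsum_split.
  assert (Hsym: fsum (2^p) (fun k => G (2*y/2^S p) ((PI + 2*INR (2^p+k)*PI)/2^S p)) =
                fsum (2^p) (fun k => G (2*y/2^S p) ((PI + 2*INR k*PI)/2^S p))).
  { rewrite <- fsum_rev. apply fsum_ext. intros k Hk. unfold G. f_equal. f_equal.
    assert (Hn : (2^p + (2^p - 1 - k) + k + 1 = 2 * 2^p)%nat) by (clear -Hk; set (M := (2^p)%nat) in *; lia).
    apply (f_equal INR) in Hn. rewrite !plus_INR, mult_INR, pow_INR in Hn.
    replace (INR 2) with 2 in Hn by (simpl; ring). replace (INR 1) with 1 in Hn by (simpl; ring).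
        replace (INR (2 ^ p + (2 ^ p - 1 - k))) with (2 * 2^p - 1 - INR k) by (rewrite plus_INR, pow_INR; replace (INR 2) with 2 by (simpl; ring); lra).
    rewrite <- cos_2PI_minus. f_equal. simpl. field. lra. }
  rewrite Hsym. unfold w. rewrite fsum_scal.
  rewrite (fsum_ext _ _ (fun k => G (y / 2 ^ p) ((2 * INR k + 1) * PI / 2 ^ S p))).
  - simpl pow. field. lra.
  - intros k _. f_equal; simpl; field; lra.
Qed.

Lemma w_scaled y p k : y <> 0 -> w y p k =
  (2 ^ p * sinh (y / 2 ^ p)) /
  (2 * ((2 ^ p * sinh (y / 2 / 2 ^ p)) * (2 ^ p * sinh (y / 2 / 2 ^ p)))
   + 2 * ((2 ^ p * sin ((2 * INR k + 1) * PI / 4 / 2 ^ p)) * (2 ^ p * sin ((2 * INR k + 1) * PI / 4 / 2 ^ p)))).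
Proof.
  intros Hy. unfold w, G. pose proof (pow_lt 2 p ltac:(lra)) as H2p.
  rewrite (cosh_half (y / 2 ^ p)).
  replace ((2 * INR k + 1) * PI / 2 ^ S p) with (2 * ((2 * INR k + 1) * PI / 4 / 2 ^ p)) by (simpl; field; lra).
  rewrite cos_2a_sin. replace (y / 2 ^ p / 2) with (y / 2 / 2 ^ p) by (field; lra).
  assert (sinh (y / 2 / 2 ^ p) <> 0) by (apply sinh_neq0; intro H; apply Hy;
    apply (Rmult_eq_reg_r (/ 2 / 2 ^ p)); [lra| apply Rgt_not_eq; apply Rmult_lt_0_compat; [lra|apply Rinv_0_lt_compat; lra]]).
  assert (0 < sinh (y / 2 / 2 ^ p) ^ 2) by (apply pow2_gt_0; auto).
  pose proof (pow2_ge_0 (sin ((2 * INR k + 1) * PI / 4 / 2 ^ p))).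
  set (s := sinh (y / 2 / 2 ^ p)) in *. set (t := sin ((2 * INR k + 1) * PI / 4 / 2 ^ p)) in *.
  set (P := 2 ^ p) in *.
  assert (0 < 2 * (P * s * (P * s)) + 2 * (P * t * (P * t))).
  { assert (0 < P * s * (P * s)) by (replace (P*s*(P*s)) with (P*P*s^2) by ring; apply Rmult_lt_0_compat; nra). nra. }
  field. split; [lra|]. split; [|lra]. nra.
Qed.

Lemma scaled_lim f : f 0 = 0 -> derivable_pt_lim f 0 1 -> forall a, Un_cv (fun p => 2 ^ p * f (a / 2 ^ p)) a.
Proof.
  intros H0 Hd a eps Heps. destruct (Req_dec a 0) as [->|Ha].
  - exists O. intros n _. unfold Rdist. replace (0 / 2 ^ n) with 0 by (field; apply pow_nonzero; lra).
    rewrite H0. replace (2 ^ n * 0 - 0) with 0 by ring. rewrite Rabs_R0; lra.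
  - assert (Hapos : 0 < Rabs a) by (apply Rabs_pos_lt; auto).
    destruct (Hd (eps / Rabs a) ltac:(apply Rdiv_lt_0_compat; lra)) as [d Hdd].
    pose proof (is_lim_seq_geom (/ 2) ltac:(rewrite Rabs_pos_eq; lra)) as Hg.
    apply is_lim_seq_Reals in Hg. destruct (Hg (d / Rabs a) ltac:(apply Rdiv_lt_0_compat; [apply cond_pos|lra])) as [N HN].
    exists N. intros n Hn. specialize (HN n Hn). unfold Rdist in *. rewrite Rminus_0_r in HN.
    pose proof (pow_lt 2 n ltac:(lra)) as H2n.
    assert (Hh : a / 2 ^ n <> 0) by (unfold Rdiv; apply Rmult_integral_contrapositive; split; auto; apply Rinv_neq_0_compat; lra).
    assert (Hhd : Rabs (a / 2 ^ n) < d).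
    { rewrite pow_inv in HN. rewrite Rabs_pos_eq in HN by (apply Rlt_le, Rinv_0_lt_compat; lra).
      unfold Rdiv. rewrite Rabs_mult, (Rabs_pos_eq (/ 2 ^ n)) by (apply Rlt_le, Rinv_0_lt_compat; lra).
      apply (Rmult_lt_reg_r (/ Rabs a)). apply Rinv_0_lt_compat; lra.
      replace (Rabs a * / 2 ^ n * / Rabs a) with (/ 2 ^ n) by (field; lra). exact HN. }
    specialize (Hdd (a / 2 ^ n) Hh Hhd). rewrite Rplus_0_l, H0, Rminus_0_r in Hdd.
    replace (2 ^ n * f (a / 2 ^ n) - a) with (a * (f (a / 2 ^ n) / (a / 2 ^ n) - 1)) by (field; lra).
    rewrite Rabs_mult. apply (Rmult_lt_reg_l (/ Rabs a)). apply Rinv_0_lt_compat; lra.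
    replace (/ Rabs a * (Rabs a * Rabs (f (a / 2 ^ n) / (a / 2 ^ n) - 1))) with (Rabs (f (a / 2 ^ n) / (a / 2 ^ n) - 1)) by (field; lra).
    replace (/ Rabs a * eps) with (eps / Rabs a) by (field; lra). exact Hdd.
Qed.

Lemma lim_sin a : Un_cv (fun p => 2 ^ p * sin (a / 2 ^ p)) a.
Proof. apply scaled_lim. apply sin_0. rewrite <- cos_0. apply derivable_pt_lim_sin. Qed.

Lemma lim_sinh a : Un_cv (fun p => 2 ^ p * sinh (a / 2 ^ p)) a.
Proof. apply scaled_lim. apply sinh_0. rewrite <- cosh_0. apply derivable_pt_lim_sinh. Qed.

Definition Lpf y k := 8 * y / (PI ^ 2 * (2 * INR k + 1) ^ 2 + 4 * y ^ 2).

Lemma w_lim y k : y <> 0 -> Un_cv (fun p => w y p k) (Lpf y k).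
Proof.
  intros Hy. apply is_lim_seq_Reals.
  set (c := (2 * INR k + 1) * PI / 4).
  assert (Hc : 0 < c) by (unfold c; pose proof (pos_INR k); pose proof PI_RGT_0; apply Rdiv_lt_0_compat; nra).
  apply (is_lim_seq_ext (fun p => (2 ^ p * sinh (y / 2 ^ p)) /
  (2 * ((2 ^ p * sinh (y / 2 / 2 ^ p)) * (2 ^ p * sinh (y / 2 / 2 ^ p)))
   + 2 * ((2 ^ p * sin (c / 2 ^ p)) * (2 ^ p * sin (c / 2 ^ p)))))).
  { intros p. rewrite w_scaled; auto. }
  replace (Lpf y k) with (y / (2 * ((y/2) * (y/2)) + 2 * (c * c))).
  2:{ unfold Lpf, c. pose proof PI_RGT_0. pose proof (pos_INR k). assert (0 < (2 * INR k + 1) * PI) by nra. field. split; nra. }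
  apply is_lim_seq_div'.
  - apply is_lim_seq_Reals, lim_sinh.
  - apply is_lim_seq_plus'; apply (is_lim_seq_scal_l _ 2 (Finite _)); apply is_lim_seq_mult';
      apply is_lim_seq_Reals; (apply lim_sinh || apply lim_sin).
  - nra.
Qed.

Lemma sin_ge_third x : 0 <= x <= 2 -> x / 3 <= sin x.
Proof. intros H. assert (2 < PI) by (pose proof PI2_1; lra).
  destruct (sin_bound x 0 ltac:(lra) ltac:(lra)) as [H1 _].
  unfold sin_approx, sin_term in H1. simpl in H1. nra. Qed.

Lemma w_dom y : y <> 0 -> exists K, 0 <= K /\
  forall p k, (k < 2 ^ p)%nat -> Rabs (w y p k) <= 18 * K / (2 * INR k + 1) ^ 2.
Proof.
  intros Hy. destruct (cv_bounded _ _ (lim_sinh y)) as [K HK].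
  exists K. split. { specialize (HK O). pose proof (Rabs_pos (2 ^ 0 * sinh (y / 2 ^ 0))). lra. }
  intros p k Hk. rewrite w_scaled by auto.
  pose proof (pow_lt 2 p ltac:(lra)) as H2p. pose proof PI2_1. pose proof (pos_INR k).
  set (c := (2 * INR k + 1) * PI / 4).
  assert (Hk' : 2 * INR k + 1 <= 2 * 2 ^ p).
  { pose proof (le_INR _ _ Hk) as HkS. rewrite S_INR, pow_INR in HkS.
    replace (INR 2) with 2 in HkS by (simpl; ring). lra. }
  assert (Hcx : 0 <= c / 2 ^ p <= 2).
  { unfold c. split. apply Rdiv_le_0_compat; [|lra]. apply Rmult_le_pos; [|lra]. nra.
    apply (Rmult_le_reg_r (2 ^ p)); auto. unfold Rdiv. rewrite Rmult_assoc, Rinv_l by lra.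
    assert (PI <= 4) by apply PI_4. nra. }
  pose proof (sin_ge_third _ Hcx) as Hs.
  set (s := sinh (y / 2 / 2 ^ p)) in *. set (t := sin (c / 2 ^ p)) in *.
  assert (Ht : (2 * INR k + 1) / 6 <= 2 ^ p * t).
  { apply (Rmult_le_compat_l (2 ^ p)) in Hs; [|lra].
    replace (2 ^ p * (c / 2 ^ p / 3)) with (c / 3) in Hs by (field; lra).
    assert ((2 * INR k + 1) / 6 <= c / 3); [|lra]. unfold c.
    apply (Rmult_le_reg_r 12); [lra|]. field_simplify. nra. }
  assert (Hden : (2 * INR k + 1) ^ 2 / 18 <= 2 * (2 ^ p * s * (2 ^ p * s)) + 2 * (2 ^ p * t * (2 ^ p * t))).
  { assert (0 <= 2 ^ p * s * (2 ^ p * s)) by nra. nra. }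
  assert (Hpos : 0 < (2 * INR k + 1) ^ 2 / 18) by nra.
  unfold Rdiv at 1. rewrite Rabs_mult, (Rabs_pos_eq (/ _)) by (apply Rlt_le, Rinv_0_lt_compat; lra).
  replace (18 * K / (2 * INR k + 1) ^ 2) with (K * / ((2 * INR k + 1) ^ 2 / 18)) by (field; lra).
  apply Rmult_le_compat. apply Rabs_pos. apply Rlt_le, Rinv_0_lt_compat; lra. apply HK.
  apply Rinv_le_contravar; auto.
Qed.

Lemma fin_conv (u : nat -> nat -> R) (L : nat -> R) K0 e : 0 < e ->
  (forall k, Un_cv (fun p => u p k) (L k)) ->
  exists P, forall p, (P <= p)%nat -> forall k, (k < K0)%nat -> Rabs (u p k - L k) < e.
Proof.
  intros He Hc. induction K0.
  - exists O. intros; lia.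
  - destruct IHK0 as [P1 HP1]. destruct (Hc K0 e He) as [P2 HP2].
    exists (Nat.max P1 P2). intros p Hp k Hk.
    destruct (Nat.eq_dec k K0) as [->|Hne].
    + specialize (HP2 p ltac:(lia)). unfold Rdist in HP2. exact HP2.
    + apply HP1; lia.
Qed.

Lemma eq_by_eps a b : (forall eps, 0 < eps -> Rabs (a - b) < eps) -> a = b.
Proof. intros H. destruct (Req_dec a b); auto. exfalso.
  assert (0 < Rabs (a - b)) by (apply Rabs_pos_lt; lra). specialize (H _ H1). lra. Qed.

Lemma Lpf_bound y k : Rabs (Lpf y k) <= 2 * Rabs y / (2 * INR k + 1) ^ 2.
Proof.
  unfold Lpf. pose proof (pos_INR k). pose proof PI2_1.
  assert (Ha : 0 < (2 * INR k + 1) ^ 2) by nra.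
  assert (Hb : 0 <= 4 * y ^ 2) by nra.
  assert (HP : 4 <= PI ^ 2) by nra.
  assert (Hc : 4 * (2 * INR k + 1) ^ 2 <= PI ^ 2 * (2 * INR k + 1) ^ 2 + 4 * y ^ 2).
  { assert (0 <= (PI ^ 2 - 4) * (2 * INR k + 1) ^ 2) by (apply Rmult_le_pos; lra). lra. }
  unfold Rdiv. rewrite Rabs_mult, Rabs_mult, (Rabs_pos_eq 8) by lra.
  rewrite (Rabs_pos_eq (/ _)) by (apply Rlt_le, Rinv_0_lt_compat; nra).
  replace (2 * Rabs y * / (2 * INR k + 1) ^ 2) with (8 * Rabs y * / (4 * (2 * INR k + 1) ^ 2)) by (field; lra).
  apply Rmult_le_compat_l. pose proof (Rabs_pos y); lra.
  apply Rinv_le_contravar; lra.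
Qed.

Theorem tanh_pf y : is_series (Lpf y) (tanh y).
Proof.
  destruct (Req_dec y 0) as [->|Hy].
  - unfold tanh. rewrite sinh_0. unfold Rdiv. rewrite Rmult_0_l.
    replace 0 with (fsum 0 (Lpf 0)) at 2 by reflexivity. apply is_series_finite.
    intros n _. unfold Lpf. unfold Rdiv. ring.
  - destruct (w_dom y Hy) as [K [HK0 HK]].
    set (D := fun k => 18 * (K + Rabs y) * / (2 * INR k + 1) ^ 2).
    assert (HD0 : forall k, 0 <= D k).
    { intros k. unfold D. pose proof (pos_INR k). pose proof (Rabs_pos y).
      apply Rmult_le_pos. nra. apply Rlt_le, Rinv_0_lt_compat. nra. }
    assert (exD : exs D).
    { exists (18 * (K + Rabs y) * Series (fun k => / (2 * INR k + 1) ^ 2)).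
      apply (is_series_scal_l (18 * (K + Rabs y)) (fun k => / (2 * INR k + 1) ^ 2)).
      apply Series_correct, ex_series_odd2. }
    assert (HLD : forall k, Rabs (Lpf y k) <= D k).
    { intros k. eapply Rle_trans. apply Lpf_bound. unfold D. pose proof (pos_INR k).
      assert (0 < / (2 * INR k + 1) ^ 2) by (apply Rinv_0_lt_compat; nra).
      unfold Rdiv. pose proof (Rabs_pos y). nra. }
    assert (HwD : forall p k, (k < 2 ^ p)%nat -> Rabs (w y p k) <= D k).
    { intros p k Hk. eapply Rle_trans. apply HK; auto. unfold D. pose proof (pos_INR k).
      assert (0 < / (2 * INR k + 1) ^ 2) by (apply Rinv_0_lt_compat; nra).
      unfold Rdiv. pose proof (Rabs_pos y). nra. }
    assert (exL : exs (Lpf y)).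
    { apply (@ex_series_le R_AbsRing R_CompleteNormedModule _ D); auto. }
    replace (tanh y) with (Series (Lpf y)). apply Series_correct; auto.
    symmetry. apply eq_by_eps. intros eps Heps. set (e := eps / 3).
    assert (He : 0 < e) by (unfold e; lra).
    destruct (ser_tail D exD e He) as [K1 HK1].
    destruct (ser_tail (Lpf y) exL e He) as [K2 HK2].
    set (K0 := Nat.max K1 K2).
    assert (He' : 0 < e / (INR K0 + 1)) by (pose proof (pos_INR K0); apply Rdiv_lt_0_compat; lra).
    destruct (fin_conv (w y) (Lpf y) K0 _ He' (fun k => w_lim y k Hy)) as [P HP].
    set (p := Nat.max P K0).
    assert (Hp : (K0 <= 2 ^ p)%nat) by (pose proof (Nat.pow_gt_lin_r 2 p ltac:(lia)); unfold p in *; lia).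
    rewrite (tanh_finite y p).
    replace (2 ^ p)%nat with (K0 + (2 ^ p - K0))%nat by lia. rewrite fsum_split.
    set (A := fsum K0 (w y p)). set (Bt := fsum (2 ^ p - K0) (fun k => w y p (K0 + k)%nat)).
    assert (HB : Rabs Bt < e).
    { eapply Rle_lt_trans. apply fsum_abs.
      eapply Rle_lt_trans. apply (fsum_le _ _ (fun k => D (K0 + k)%nat)).
      { intros k Hk. apply HwD. lia. }
      pose proof (fsum_split K0 (2 ^ p - K0) D).
      pose proof (ser_partial_le D (K0 + (2 ^ p - K0)) HD0 exD).
      specialize (HK1 K0 ltac:(unfold K0; lia)).
      rewrite Rabs_pos_eq in HK1 by (pose proof (ser_partial_le D K0 HD0 exD); lra). lra. }
    assert (HA : Rabs (A - fsum K0 (Lpf y)) < e).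
    { unfold A. replace (fsum K0 (w y p) - fsum K0 (Lpf y)) with (fsum K0 (fun k => w y p k - Lpf y k))
        by (rewrite fsum_minus; reflexivity).
      eapply Rle_lt_trans. apply fsum_abs.
      eapply Rle_lt_trans. apply (fsum_le _ _ (fun _ => e / (INR K0 + 1))).
      { intros k Hk. left. apply HP; auto. unfold p; lia. }
      assert (forall n c, fsum n (fun _ => c) = INR n * c) as Hc.
      { induction n; intros c; simpl. ring. rewrite IHn. destruct n; simpl; ring. }
      rewrite Hc. pose proof (pos_INR K0). 
      apply (Rmult_lt_reg_r (INR K0 + 1)); [lra|]. replace (INR K0 * (e / (INR K0 + 1)) * (INR K0 + 1)) with (INR K0 * e) by (field; lra). nra. }
    specialize (HK2 K0 ltac:(unfold K0; lia)).
    apply Rabs_def2 in HK2. apply Rabs_def2 in HA. apply Rabs_def2 in HB.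
    apply Rabs_def1; unfold e in *; lra.
Qed.

Definition sterm (N : nat) (t : R) (k : nat) : R :=
  1 / ((2 * INR k + 1) ^ (2 * N)%nat * (PI ^ 2 * (2 * INR k + 1) ^ 2 + 4 * t ^ 2)).
Definition lterm (N : nat) (k : nat) : R := 1 / (2 * INR k + 1) ^ (2 * N + 2)%nat.
Definition SS N t := Series (sterm N t).
Definition lam N := Series (lterm N).
Definition cc N := (-1) ^ N * 2 ^ (2 * N + 3)%nat * lam N / PI ^ (2 * N + 2)%nat.
Definition RR N t := (-1) ^ N * 2 ^ (2 * N + 3)%nat * t ^ (2 * N + 1)%nat / PI ^ (2 * N)%nat * SS N t.

Lemma odd_ge1 k : 1 <= 2 * INR k + 1.
Proof. pose proof (pos_INR k); lra. Qed.

Lemma PI2_ge4 : 4 <= PI ^ 2.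
Proof. pose proof PI2_1. nra. Qed.

Lemma sterm_bounds N t k : 0 < sterm N t k <= / (2 * INR k + 1) ^ 2.
Proof.
  unfold sterm. pose proof (odd_ge1 k). pose proof PI2_ge4.
  assert (H1 : 1 <= (2 * INR k + 1) ^ (2 * N)) by (apply pow_R1_Rle; lra).
  assert (H2 : (2 * INR k + 1) ^ 2 <= PI ^ 2 * (2 * INR k + 1) ^ 2 + 4 * t ^ 2).
  { assert (0 <= 4 * t ^ 2) by nra. assert (1 <= (2 * INR k + 1) ^ 2) by nra. nra. }
  assert (H3 : 1 <= (2 * INR k + 1) ^ 2) by nra.
  split. apply Rdiv_lt_0_compat; [lra|]. apply Rmult_lt_0_compat; lra.
  unfold Rdiv. rewrite Rmult_1_l. apply Rinv_le_contravar. lra.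
  replace ((2 * INR k + 1) ^ 2) with (1 * (2 * INR k + 1) ^ 2) at 1 by ring.
  apply Rmult_le_compat; lra.
Qed.

Lemma lterm_bounds N k : 0 < lterm N k <= / (2 * INR k + 1) ^ 2.
Proof.
  unfold lterm. pose proof (odd_ge1 k).
  replace (2 * N + 2)%nat with (2 * N + 2)%nat by reflexivity. rewrite pow_add.
  assert (H1 : 1 <= (2 * INR k + 1) ^ (2 * N)) by (apply pow_R1_Rle; lra).
  assert (H3 : 1 <= (2 * INR k + 1) ^ 2) by nra.
  split. apply Rdiv_lt_0_compat; [lra|]. apply Rmult_lt_0_compat; lra.
  unfold Rdiv. rewrite Rmult_1_l. apply Rinv_le_contravar. lra.
  replace ((2 * INR k + 1) ^ 2) with (1 * (2 * INR k + 1) ^ 2) at 1 by ring.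
  apply Rmult_le_compat; lra.
Qed.

Lemma ex_sterm N t : exs (sterm N t).
Proof. apply (@ex_series_le R_AbsRing R_CompleteNormedModule _ (fun k => / (2 * INR k + 1) ^ 2)); [|apply ex_series_odd2].
  intros k. unfold norm; simpl; unfold abs; simpl. destruct (sterm_bounds N t k) as [A B].
  simpl in B. rewrite Rabs_pos_eq; lra. Qed.

Lemma ex_lterm N : exs (lterm N).
Proof. apply (@ex_series_le R_AbsRing R_CompleteNormedModule _ (fun k => / (2 * INR k + 1) ^ 2)); [|apply ex_series_odd2].
  intros k. unfold norm; simpl; unfold abs; simpl. destruct (lterm_bounds N k) as [A B].
  simpl in B. rewrite Rabs_pos_eq; lra. Qed.

Lemma is_series_lin (a b : nat -> R) la lb al be :
  is_series a la -> is_series b lb -> is_series (fun n => al * a n + be * b n) (al * la + be * lb).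
Proof.
  intros Ha Hb. pose proof (is_series_plus _ _ _ _ (is_series_scal_l al _ _ Ha) (is_series_scal_l be _ _ Hb)) as H.
  exact H.
Qed.

Lemma SS_rec N t : SS N t = lam N / PI ^ 2 - 4 * t ^ 2 / PI ^ 2 * SS (S N) t.
Proof.
  unfold SS, lam. apply is_series_unique.
  replace (Series (lterm N) / PI ^ 2 - 4 * t ^ 2 / PI ^ 2 * Series (sterm (S N) t))
    with (/ PI ^ 2 * Series (lterm N) + (- (4 * t ^ 2 / PI ^ 2)) * Series (sterm (S N) t)) by (unfold Rdiv; ring).
  eapply is_series_ext; [|apply is_series_lin; apply Series_correct; [apply ex_lterm|apply ex_sterm]].
  intros k. unfold sterm, lterm. pose proof (odd_ge1 k). pose proof PI2_ge4.
  replace (2 * S N)%nat with (2 * N + 2)%nat by lia. rewrite !pow_add.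
  assert (0 < (2 * INR k + 1) ^ (2 * N)) by (apply pow_lt; lra).
  assert (0 < PI ^ 2 * (2 * INR k + 1) ^ 2 + 4 * t ^ 2) by nra.
  match goal with |- ?a = ?b => change (@eq R a b) end. field. repeat split; nra.
Qed.

Lemma RR_step N t : RR N t = cc N * t ^ (2 * N + 1)%nat + RR (S N) t.
Proof.
  unfold RR, cc. rewrite (SS_rec N t).
  replace (2 * S N + 3)%nat with (2 * N + 3 + 2)%nat by lia.
  replace (2 * S N + 1)%nat with (2 * N + 1 + 2)%nat by lia.
  replace (2 * S N)%nat with (2 * N + 2)%nat by lia.
  rewrite !pow_add. simpl pow. pose proof PI_RGT_0.
  assert (0 < PI ^ (2 * N)) by (apply pow_lt; lra). field. split; [lra|]. apply pow_nonzero; lra.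
Qed.

Theorem tanh_expand N t : tanh t = fsum N (fun j => cc j * t ^ (2 * j + 1)%nat) + RR N t.
Proof.
  induction N.
  - simpl fsum. unfold RR, SS. simpl pow.
    rewrite <- (is_series_unique _ _ (tanh_pf t)).
    rewrite <- Series_scal_l. replace (2 * 0 + 3)%nat with 3%nat by reflexivity.
    rewrite Rplus_0_l. apply Series_ext. intros k. unfold Lpf, sterm. simpl pow.
    pose proof (odd_ge1 k). pose proof PI2_ge4.
    assert (0 < PI ^ 2 * (2 * INR k + 1) ^ 2 + 4 * t ^ 2) by nra. field. lra.
  - rewrite IHN, RR_step. cbn [fsum]. ring.
Qed.

Definition bco (B : nat -> R) (n : nat) : R := B n * (2 ^ n * (2 ^ n - 1)) / INR (fact n).

Lemma bern_series B (HB : is_bernoulli B) t : 0 < Rabs t < PI / 2 ->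
  is_series (fun n => bco B n * t ^ n) (t * tanh t - t).
Proof.
  intros Ht. pose proof PI_RGT_0.
  assert (H4 := HB (4 * t) ltac:(rewrite Rabs_mult, (Rabs_pos_eq 4) by lra; lra)).
  assert (H2 := HB (2 * t) ltac:(rewrite Rabs_mult, (Rabs_pos_eq 2) by lra; lra)).
  apply is_series_Reals in H4, H2.
  pose proof (is_series_lin _ _ _ _ 1 (-1) H4 H2) as Hl.
  replace (t * tanh t - t) with (1 * (4 * t / (exp (4 * t) - 1)) + -1 * (2 * t / (exp (2 * t) - 1))).
  - eapply is_series_ext; [|exact Hl]. intros n. unfold bco. simpl.
    rewrite !Rpow_mult_distr. replace 4 with (2 * 2) by ring. rewrite Rpow_mult_distr.
    pose proof (INR_fact_neq_0 n). field. auto.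
  - assert (Ht0 : t <> 0) by (intro; subst; rewrite Rabs_R0 in Ht; lra).
    set (E := exp t). assert (HE : 0 < E) by apply exp_pos.
    assert (H2t : exp (2 * t) = E * E) by apply exp_double.
    assert (H4t : exp (4 * t) = (E * E) * (E * E)) by (replace (4 * t) with (2 * (2 * t)) by ring; rewrite exp_double, H2t; ring).
    assert (HE2 : E * E <> 1).
    { rewrite <- H2t. rewrite <- exp_0. intro Heq. apply exp_inv in Heq. lra. }
    rewrite H2t, H4t. unfold tanh, sinh, cosh. rewrite exp_Ropp. fold E.
    assert (E * E + 1 <> 0) by nra.
    field. repeat split; try lra; try nra.
Qed.

Lemma sum_incr_zero (a : nat -> R) n s : (forall m, (m < n)%nat -> a m = 0) -> is_series a s ->
  is_series (fun i => a (n + i)%nat) s.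
Proof.
  intros Hz Hs. destruct n.
  - eapply is_series_ext; [|exact Hs]. intros; reflexivity.
  - apply is_series_incr_n; [lia|].
    
    rewrite sum_n_Reals. simpl Nat.pred. rewrite <- fsum_sumf.
    rewrite (fsum_ext _ _ (fun _ => 0)) by (intros; apply Hz; lia).
    assert (forall m, fsum m (fun _ => 0) = 0) as Z by (induction m; simpl; lra).
    rewrite Z. unfold plus; simpl. rewrite Rplus_0_r. exact Hs.
Qed.

Lemma pow_le1 x j : 0 <= x <= 1 -> x ^ j <= 1.
Proof. intros H. induction j; simpl. lra. assert (0 <= x ^ j) by (apply pow_le; lra). nra. Qed.

Lemma coef_zero_one (d : nat -> R) r C K n (s : R) A t :
  0 < r -> (forall m, Rabs (d m) * r ^ m <= A) -> (forall m, (m < n)%nat -> d m = 0) -> (n < K)%nat ->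
  0 < Rabs t -> Rabs t <= r / 2 -> Rabs t <= 1 ->
  is_series (fun m => d m * t ^ m) s -> Rabs s <= C * Rabs t ^ K ->
  Rabs (d n) <= (Rabs C + 2 * A / r ^ (S n)) * Rabs t.
Proof.
  intros Hr HA Hz HnK Ht0 Htr Ht1 Hs HsC.
  assert (Htn : t ^ n <> 0) by (apply pow_nonzero; intro; subst; rewrite Rabs_R0 in Ht0; lra).
  assert (Hz' : forall m, (m < n)%nat -> d m * t ^ m = 0) by (intros m Hm; rewrite (Hz m Hm); ring).
  pose proof (sum_incr_zero (fun m => d m * t ^ m) n s Hz' Hs) as H1.
  assert (H2 : is_series (fun i => d (n + i)%nat * t ^ i) (s * / t ^ n)).
  { eapply is_series_ext; [|apply (is_series_scal_r (/ t ^ n) _ _ H1)].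
    intros i. simpl. rewrite pow_add. field. auto. }
  assert (H3 : is_series (fun i => d (n + S i)%nat * t ^ S i) (s * / t ^ n - d n)).
  { apply (is_series_incr_1 (fun i => d (n + i)%nat * t ^ i)).
    rewrite Nat.add_0_r. unfold plus; simpl.
    replace (s * / t ^ n - d n + d n * 1) with (s * / t ^ n) by ring. exact H2. }
  set (q := Rabs t / r).
  assert (Hq : 0 <= q <= / 2) by (unfold q; split; [apply Rdiv_le_0_compat; lra|];
    apply (Rmult_le_reg_r r); [lra|]; unfold Rdiv; rewrite Rmult_assoc, Rinv_l by lra; lra).
  assert (Hgeo : is_series (fun i => A / r ^ n * q * q ^ i) (A / r ^ n * q * / (1 - q))).
  { apply (is_series_scal_l (A / r ^ n * q) (fun i => q ^ i)). apply is_series_geom.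
    rewrite Rabs_pos_eq; lra. }
  assert (Hdm : forall m, Rabs (d m) <= A / r ^ m).
  { intros m. apply (Rmult_le_reg_r (r ^ m)). apply pow_lt; lra.
    unfold Rdiv. rewrite Rmult_assoc, Rinv_l, Rmult_1_r by (apply pow_nonzero; lra). apply HA. }
  assert (Hb : forall i, Rabs (d (n + S i)%nat * t ^ S i) <= A / r ^ n * q * q ^ i).
  { intros i. rewrite Rabs_mult, <- RPow_abs.
    replace (A / r ^ n * q * q ^ i) with (A / r ^ (n + S i) * Rabs t ^ S i).
    - apply Rmult_le_compat_r. apply pow_le, Rabs_pos. apply Hdm.
    - assert (Hqq : q * q ^ i = Rabs t ^ S i * / r ^ S i).
      { unfold q. unfold Rdiv. rewrite <- pow_inv, <- Rpow_mult_distr. simpl. reflexivity. }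
      rewrite Rmult_assoc, Hqq. rewrite pow_add. pose proof (pow_lt r n Hr). pose proof (pow_lt r (S i) Hr).
      field. lra. }
  assert (HT := ser_abs_le _ _ _ _ H3 Hb Hgeo).
  assert (HT' : A / r ^ n * q * / (1 - q) <= 2 * A / r ^ S n * Rabs t).
  { assert (0 <= A) by (specialize (HA O); pose proof (Rabs_pos (d O)); simpl in HA; lra).
    assert (Hrn : r ^ S n = r * r ^ n) by reflexivity. rewrite Hrn.
    pose proof (pow_lt r n Hr).
    assert (HX : 0 <= A / (r * r ^ n) * Rabs t).
    { apply Rmult_le_pos; [|apply Rabs_pos]. apply Rdiv_le_0_compat; auto. apply Rmult_lt_0_compat; lra. }
    replace (A / r ^ n * q) with (A / (r * r ^ n) * Rabs t) by (unfold q; field; lra).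
    replace (2 * A / (r * r ^ n) * Rabs t) with (A / (r * r ^ n) * Rabs t * 2) by (field; lra).
    apply Rmult_le_compat_l; auto.
    replace 2 with (/ / 2) by field. apply Rinv_le_contravar; lra. }
  assert (HdnEq : d n = s * / t ^ n - (s * / t ^ n - d n)) by ring.
  assert (HsT : Rabs (s * / t ^ n) <= Rabs C * Rabs t).
  { rewrite Rabs_mult, Rabs_inv, <- RPow_abs.
    assert (HK : (K = n + (K - n))%nat) by lia.
    rewrite HK, pow_add in HsC. pose proof (pow_lt (Rabs t) n Ht0).
    assert (Hj : 0 <= Rabs t ^ (K - n) <= Rabs t).
    { destruct (K - n)%nat as [|j] eqn:Ej. lia. simpl. 
      pose proof (pow_le1 (Rabs t) j ltac:(lra)). pose proof (pow_le (Rabs t) j (Rabs_pos t)).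
      split; [apply Rmult_le_pos; lra|]. nra. }
    assert (HsC' : Rabs s <= Rabs C * Rabs t ^ (K - n) * Rabs t ^ n).
    { pose proof (Rle_abs C). pose proof (Rabs_pos C).
      assert (C * (Rabs t ^ n * Rabs t ^ (K - n)) <= Rabs C * (Rabs t ^ n * Rabs t ^ (K - n))).
      { apply Rmult_le_compat_r; [|lra]. apply Rmult_le_pos; lra. }
      lra. }
    apply (Rmult_le_reg_r (Rabs t ^ n)); auto. rewrite Rmult_assoc, Rinv_l, Rmult_1_r by lra.
    pose proof (Rabs_pos C). 
    assert (Rabs C * Rabs t ^ (K - n) <= Rabs C * Rabs t) by (apply Rmult_le_compat_l; lra).
    nra. }
  rewrite HdnEq. unfold Rminus at 1. eapply Rle_trans. apply Rabs_triang. rewrite Rabs_Ropp.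
  lra.
Qed.

Lemma coef_step (d : nat -> R) r C K n :
  0 < r -> (forall t, 0 < Rabs t < r -> exists s, is_series (fun m => d m * t ^ m) s /\ Rabs s <= C * Rabs t ^ K) ->
  (forall m, (m < n)%nat -> d m = 0) -> (n < K)%nat -> d n = 0.
Proof.
  intros Hr H Hz HnK. set (r0 := r / 2).
  assert (Hr0 : 0 < r0) by (unfold r0; lra).
  destruct (H r0 ltac:(rewrite Rabs_pos_eq; unfold r0; lra)) as [s0 [Hs0 _]].
  assert (Hl := ex_series_lim_0 _ (ex_intro _ s0 Hs0)). apply is_lim_seq_Reals in Hl.
  destruct (cv_bounded _ _ Hl) as [A HA].
  assert (HA' : forall m, Rabs (d m) * r0 ^ m <= A).
  { intros m. specialize (HA m). rewrite Rabs_mult, <- RPow_abs, (Rabs_pos_eq r0) in HA by lra. exact HA. }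
  destruct (Req_dec (d n) 0) as [|Hdn]; auto. exfalso.
  set (dn := Rabs (d n)). assert (Hdnp : 0 < dn) by (apply Rabs_pos_lt; auto).
  assert (HA0 : 0 <= A) by (specialize (HA' O); pose proof (Rabs_pos (d O)); simpl in HA'; lra).
  set (Q := Rabs C + 2 * A / r0 ^ S n + 1).
  assert (HQ : 1 <= Q).
  { unfold Q. pose proof (Rabs_pos C). assert (0 <= 2 * A / r0 ^ S n).
    { apply Rdiv_le_0_compat. lra. apply pow_lt; lra. } lra. }
  set (t := Rmin (Rmin (r0 / 2) 1) (dn / (2 * Q))).
  assert (Ht0 : 0 < t).
  { unfold t. apply Rmin_glb_lt. apply Rmin_glb_lt; lra. apply Rdiv_lt_0_compat; lra. }
  assert (Ht1 : t <= r0 / 2) by (unfold t; eapply Rle_trans; [apply Rmin_l|apply Rmin_l]).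
  assert (Ht2 : t <= 1) by (unfold t; eapply Rle_trans; [apply Rmin_l|apply Rmin_r]).
  assert (Ht3 : t <= dn / (2 * Q)) by (unfold t; apply Rmin_r).
  assert (Hat : Rabs t = t) by (apply Rabs_pos_eq; lra).
  destruct (H t ltac:(rewrite Hat; unfold r0 in *; lra)) as [s [Hs HsC]].
  pose proof (coef_zero_one d r0 C K n s A t Hr0 HA' Hz HnK ltac:(lra) ltac:(lra) ltac:(lra) Hs HsC) as Hb.
  rewrite Hat in Hb. fold dn in Hb.
  assert (Hb2 : dn <= Q * t).
  { eapply Rle_trans. exact Hb. apply Rmult_le_compat_r; [lra|unfold Q; lra]. }
  assert (Q * t <= dn / 2).
  { apply (Rmult_le_compat_l Q) in Ht3; [|lra]. replace (Q * (dn / (2 * Q))) with (dn / 2) in Ht3 by (field; lra). lra. }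
  lra.
Qed.

Lemma coef_unique (d : nat -> R) r C K :
  0 < r -> (forall t, 0 < Rabs t < r -> exists s, is_series (fun m => d m * t ^ m) s /\ Rabs s <= C * Rabs t ^ K) ->
  forall n, (n < K)%nat -> d n = 0.
Proof.
  intros Hr H.
  assert (Hall : forall n m, (m <= n)%nat -> (m < K)%nat -> d m = 0).
  { induction n; intros m Hm HmK.
    - apply (coef_step d r C K m Hr H); auto. intros; lia.
    - destruct (Nat.eq_dec m (S n)) as [->|Hne].
      + apply (coef_step d r C K (S n) Hr H); auto. intros m' Hm'. apply IHn; lia.
      + apply IHn; lia. }
  intros n Hn. apply (Hall n n); auto.
Qed.

Definition qco (n : nat) : R :=
  match n with O => 0 | 1%nat => -1 | S (S m) => if Nat.even m then cc (Nat.div2 m) else 0 end.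

Lemma qco_even j : qco (2 * j + 2) = cc j.
Proof. replace (2 * j + 2)%nat with (S (S (2 * j))) by lia.
  change (qco (S (S (2 * j)))) with (if Nat.even (2 * j) then cc (Nat.div2 (2 * j)) else 0).
  rewrite Nat.even_even, Nat.div2_double. reflexivity. Qed.

Lemma qco_odd j : qco (2 * j + 3) = 0.
Proof. replace (2 * j + 3)%nat with (S (S (2 * j + 1))) by lia.
  change (qco (S (S (2 * j + 1)))) with (if Nat.even (2 * j + 1) then cc (Nat.div2 (2 * j + 1)) else 0).
  rewrite Nat.even_odd. reflexivity. Qed.

Lemma qpoly N t : fsum (2 * N + 2) (fun n => qco n * t ^ n) = fsum N (fun j => cc j * t ^ (2 * j + 2)%nat) - t.
Proof.
  induction N.
  - simpl. ring.
  - replace (2 * S N + 2)%nat with (S (S (2 * N + 2))) by lia. cbn [fsum].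
    rewrite IHN. replace (S (2 * N + 2)) with (2 * N + 3)%nat by lia.
    rewrite qco_even, qco_odd. ring.
Qed.

Lemma SS_le N t : 0 <= SS N t <= SS N 0.
Proof.
  unfold SS. split.
  - apply Series_nonneg; [|apply ex_sterm]. intros k; destruct (sterm_bounds N t k); lra.
  - apply Series_le; [|apply ex_sterm]. intros k. destruct (sterm_bounds N t k). split; [lra|].
    unfold sterm. pose proof (odd_ge1 k). pose proof PI2_ge4.
    assert (Hq1 : 0 < (2 * INR k + 1) ^ (2 * N)) by (apply pow_lt; lra).
    unfold Rdiv. rewrite !Rmult_1_l. apply Rinv_le_contravar.
    apply Rmult_lt_0_compat; [lra|]. replace (0 ^ 2) with 0 by ring. nra.
    apply Rmult_le_compat_l; [lra|]. replace (0 ^ 2) with 0 by ring. nra.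
Qed.

Lemma bco_eq_cc B (HB : is_bernoulli B) j : bco B (2 * j + 2) = cc j.
Proof.
  set (N := S j). set (K := (2 * N + 2)%nat).
  set (d := fun n => bco B n - (if (n <? K)%nat then qco n else 0)).
  assert (Hd : forall n, (n < K)%nat -> d n = 0).
  { apply (coef_unique d (PI / 2) (2 ^ (2 * N + 3) / PI ^ (2 * N) * SS N 0) K).
    - pose proof PI_RGT_0; lra.
    - intros t Ht. exists (t * RR N t). split.
      + assert (Hf : is_series (fun n => (if (n <? K)%nat then qco n else 0) * t ^ n) (fsum K (fun n => qco n * t ^ n))).
        { rewrite (fsum_ext K _ (fun n => (if (n <? K)%nat then qco n else 0) * t ^ n)).
          - apply is_series_finite. intros n Hn. apply Nat.ltb_ge in Hn. rewrite Hn. ring.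
          - intros n Hn. apply Nat.ltb_lt in Hn. rewrite Hn. reflexivity. }
        pose proof (is_series_lin _ _ _ _ 1 (-1) (bern_series B HB t Ht) Hf) as Hl.
        eapply is_series_ext; [|replace (t * RR N t) with (1 * (t * tanh t - t) + -1 * fsum K (fun n => qco n * t ^ n)); [exact Hl|]].
        * intros n. unfold d. match goal with |- ?a = ?b => change (@eq R a b) end. ring.
        * unfold K. rewrite qpoly. rewrite (tanh_expand N t).
          rewrite Rmult_plus_distr_l, <- fsum_scal.
          replace (fsum N (fun k => t * (cc k * t ^ (2 * k + 1)))) with (fsum N (fun j0 => cc j0 * t ^ (2 * j0 + 2)))
            by (apply fsum_ext; intros k _; replace (2 * k + 2)%nat with (S (2 * k + 1)) by lia; simpl; ring).
          ring.
      + unfold RR. destruct (SS_le N t) as [H0 H1].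
        replace (t * ((-1) ^ N * 2 ^ (2 * N + 3) * t ^ (2 * N + 1) / PI ^ (2 * N) * SS N t))
          with ((-1) ^ N * (2 ^ (2 * N + 3) / PI ^ (2 * N) * t ^ K * SS N t))
          by (unfold K; replace (2 * N + 2)%nat with (S (2 * N + 1)) by lia; simpl; pose proof PI_RGT_0; field; split; [apply pow_nonzero|]; lra).
        rewrite Rabs_mult, pow_1_abs, Rmult_1_l.
        assert (HP : 0 < 2 ^ (2 * N + 3) / PI ^ (2 * N)) by (apply Rdiv_lt_0_compat; apply pow_lt; pose proof PI_RGT_0; lra).
        rewrite !Rabs_mult, (Rabs_pos_eq (2 ^ (2 * N + 3) / PI ^ (2 * N))) by lra.
        rewrite (Rabs_pos_eq (SS N t)) by lra. rewrite <- RPow_abs.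
        assert (0 <= Rabs t ^ K) by (apply pow_le, Rabs_pos).
        replace (2 ^ (2 * N + 3) / PI ^ (2 * N) * SS N 0 * Rabs t ^ K) with (2 ^ (2 * N + 3) / PI ^ (2 * N) * Rabs t ^ K * SS N 0) by ring.
        apply Rmult_le_compat_l; [|lra]. apply Rmult_le_pos; lra.
  }
  specialize (Hd (2 * j + 2)%nat ltac:(unfold K, N; lia)). unfold d in Hd.
  assert (Hl : (2 * j + 2 <? K)%nat = true) by (apply Nat.ltb_lt; unfold K, N; lia).
  rewrite Hl, qco_even in Hd. lra.
Qed.

Lemma sum1_fsum N f : sum1 N f = fsum N (fun j => f (S j)).
Proof. induction N; simpl; auto. rewrite IHN. reflexivity. Qed.

Lemma tt_cc B (HB : is_bernoulli B) t j : tanh_term B t (S j) = cc j * t ^ (2 * j + 1)%nat.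
Proof.
  rewrite <- (bco_eq_cc B HB j). unfold tanh_term, bco.
  replace (2 * S j)%nat with (2 * j + 2)%nat by lia.
  replace (2 * j + 2 - 1)%nat with (2 * j + 1)%nat by lia.
  unfold Rdiv. ring.
Qed.

Lemma pos_term_series (a : nat -> R) l : (forall k, 0 < a k) -> is_series a l -> 0 < l.
Proof.
  intros H Hs. rewrite <- (is_series_unique _ _ Hs).
  eapply Rlt_le_trans; [apply (H O)|]. apply ser_lower. intros; left; auto. exists l; auto.
Qed.

Theorem theorem2 (B : nat -> R) (HB : is_bernoulli B) (N : nat) :
  (forall t : R,
     exists S : R,
       infinite_sum
         (fun k => 1 / ((2 * INR k + 1) ^ (2 * N)%nat *
                        (PI ^ 2 * (2 * INR k + 1) ^ 2 + 4 * t ^ 2))) S /\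
       tanh t = sum1 N (tanh_term B t)
                + (-1) ^ N * 2 ^ (2 * N + 3)%nat * t ^ (2 * N + 1)%nat / PI ^ (2 * N)%nat * S)
  /\
  (forall t : R, t <> 0 ->
     exists xi : R, 0 < xi < 1 /\
       tanh t = sum1 N (tanh_term B t) + xi * tanh_term B t (N + 1)%nat).
Proof.
  assert (Hsum : forall t, sum1 N (tanh_term B t) = fsum N (fun j => cc j * t ^ (2 * j + 1)%nat)).
  { intros t. rewrite sum1_fsum. apply fsum_ext. intros j _. apply tt_cc; auto. }
  split.
  - intros t. exists (SS N t). split.
    + apply is_series_Reals. apply (Series_correct (sterm N t)). apply ex_sterm.
    + rewrite Hsum. rewrite (tanh_expand N t). unfold RR. reflexivity.
  - intros t Ht. pose proof PI_RGT_0 as HPI.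
    assert (Hlam : 0 < lam N).
    { apply (pos_term_series (lterm N)). intros k; apply lterm_bounds. apply Series_correct, ex_lterm. }
    assert (HSS : 0 < SS N t).
    { apply (pos_term_series (sterm N t)). intros k; apply sterm_bounds. apply Series_correct, ex_sterm. }
    assert (Hdiff : 0 < lam N - PI ^ 2 * SS N t).
    { pose proof (is_series_lin _ _ _ _ 1 (- PI ^ 2) (Series_correct _ (ex_lterm N)) (Series_correct _ (ex_sterm N t))) as Hl.
      replace (lam N - PI ^ 2 * SS N t) with (1 * Series (lterm N) + - PI ^ 2 * Series (sterm N t)) by (unfold lam, SS; ring).
      refine (pos_term_series _ _ _ Hl).
      intros k. unfold lterm, sterm. pose proof (odd_ge1 k).
      replace (2 * N + 2)%nat with (2 * N + 2)%nat by reflexivity. rewrite pow_add.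
      assert (0 < (2 * INR k + 1) ^ (2 * N)) by (apply pow_lt; lra).
      assert (0 < t ^ 2) by (apply pow2_gt_0; auto).
      assert (0 < PI ^ 2 * (2 * INR k + 1) ^ 2 + 4 * t ^ 2) by nra.
      replace (1 * (1 / ((2 * INR k + 1) ^ (2 * N) * (2 * INR k + 1) ^ 2)) +
               - PI ^ 2 * (1 / ((2 * INR k + 1) ^ (2 * N) * (PI ^ 2 * (2 * INR k + 1) ^ 2 + 4 * t ^ 2))))
        with (4 * t ^ 2 / ((2 * INR k + 1) ^ (2 * N) * (2 * INR k + 1) ^ 2 * (PI ^ 2 * (2 * INR k + 1) ^ 2 + 4 * t ^ 2)))
        by (field; repeat split; nra).
      apply Rdiv_lt_0_compat; [lra|]. apply Rmult_lt_0_compat; [|lra]. apply Rmult_lt_0_compat; [lra|nra]. }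
    exists (SS N t * PI ^ 2 / lam N). split.
    + split.
      * apply Rdiv_lt_0_compat; [|lra]. apply Rmult_lt_0_compat; [lra|]. apply pow_lt; lra.
      * apply (Rmult_lt_reg_r (lam N)); [lra|]. unfold Rdiv. rewrite Rmult_assoc, Rinv_l, Rmult_1_r by lra. lra.
    + rewrite Hsum. replace (N + 1)%nat with (S N) by lia. rewrite (tt_cc B HB t N).
      rewrite (tanh_expand N t). f_equal. unfold RR, cc.
      replace (2 * N + 2)%nat with (2 * N + 2)%nat by reflexivity. rewrite pow_add.
      assert (PI ^ (2 * N) <> 0) by (apply pow_nonzero; lra).
      rewrite (pow_add PI (2 * N) 2). field. repeat split; lra. 
Qed.
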